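(* Let $G$ be a simple directed graph with asymmetric adjacency matrix $A$ having an exact D-IPS with two compressed nodes. Then the singular value decomposition of $A$ has a unique leading left singular vector $v$ and a unique leading right singular vector $w$ with $v,w\ge 0$ (entrywise), and the positive parts of $v$ and $w$ (the sets of indices with positive entries) identify the two compressed nodes.
   Context: A simple directed graph has no self-loops and no multiple edges. Its asymmetric adjacency matrix $A$ has $A_{ij}=1$ if there is a directed edge from $x_i$ to $x_j$ and $A_{ij}=0$ otherwise. A summarization of size $k$ consists of a surjective map $\phi$ from the vertex set onto $k$ compressed nodes $c_1,\dots,c_k$ (the sets $C_I=\phi^{-1}(c_I)$ partition the vertices) together with a simple directed summarized graph on $\{c_1,\dots,c_k\}$ described by compressed relation values $r_{IJ}$ with $r_{II}=0$ and $r_{IJ}r_{JI}=0$. The graph has an exact Directions Influence Preserving Structure (exact D-IPS) with $k$ compressed nodes if there is such a summarization with $\mathrm{sign}(A_{ij})=\mathrm{sign}(r_{IJ})$ for all $i\neq j$, $x_i\in C_I$, $x_j\in C_J$, where $\mathrm{sign}(0)=0$ differs from the sign of any nonzero number. *)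

(* Defs.v *)
From mathcomp Require Import all_boot all_order all_algebra.
From mathcomp Require Import reals.
Set Implicit Arguments. Unset Strict Implicit. Unset Printing Implicit Defensive.
Import Order.TTheory GRing.Theory Num.Theory.
Local Open Scope ring_scope.

(* A simple directed graph on vertices x_0..x_{n-1} ('I_n) is an
   irreflexive relation e (e i j = edge from x_i to x_j); multiple edges
   are impossible by construction. *)
Definition simple_digraph (n : nat) (e : rel 'I_n) : Prop := irreflexive e.

Definition adjacency (R : realType) (n : nat) (e : rel 'I_n) : 'M[R]_n :=
  \matrix_(i, j) (e i j)%:R.

(* A summarization of size k: surjective phi onto k compressed nodes, with
   compressed relation values r (a simple directed summarized graph:
   r_II = 0 and r_IJ r_JI = 0). *)
Definition summarization (R : realType) (n k : nat)
    (phi : 'I_n -> 'I_k) (r : 'M[R]_k) : Prop :=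
  (forall I : 'I_k, exists x : 'I_n, phi x = I) /\
  (forall I : 'I_k, r I I = 0) /\
  (forall I J : 'I_k, r I J * r J I = 0).

Definition exact_DIPS_summ (R : realType) (n k : nat) (A : 'M[R]_n)
    (phi : 'I_n -> 'I_k) (r : 'M[R]_k) : Prop :=
  summarization phi r /\
  (forall i j : 'I_n, i != j -> Num.sg (A i j) = Num.sg (r (phi i) (phi j))).

Definition has_exact_DIPS (R : realType) (n k : nat) (A : 'M[R]_n) : Prop :=
  exists (phi : 'I_n -> 'I_k) (r : 'M[R]_k), exact_DIPS_summ A phi r.

Definition singular_triple (R : realType) (n : nat) (A : 'M[R]_n)
    (s : R) (v w : 'cV[R]_n) : Prop :=
  0 <= s /\ v^T *m v = 1%:M /\ w^T *m w = 1%:M /\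
  A *m w = s *: v /\ A^T *m v = s *: w.

Definition top_singular_value (R : realType) (n : nat) (A : 'M[R]_n) (s : R)
    : Prop :=
  (exists v w, singular_triple A s v w) /\
  (forall s' v w, singular_triple A s' v w -> s' <= s).

Definition leading_left_sv (R : realType) (n : nat) (A : 'M[R]_n)
    (v : 'cV[R]_n) : Prop :=
  exists s w, top_singular_value A s /\ singular_triple A s v w.

Definition leading_right_sv (R : realType) (n : nat) (A : 'M[R]_n)
    (w : 'cV[R]_n) : Prop :=
  exists s v, top_singular_value A s /\ singular_triple A s v w.

(* Main.v *)
Require Import Defs.
From mathcomp Require Import all_boot all_order all_algebra.
From mathcomp Require Import reals.
From mathcomp Require Import lra ring.
Import Order.TTheory GRing.Theory Num.Theory.
Local Open Scope ring_scope.

Set Implicit Arguments.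
Section Rank1.
Variables (R : realType) (n : nat) (a b : 'I_n -> R).
Definition M1 : 'M[R]_n := \matrix_(i, j) (a i * b j).
Definition pp := \sum_i a i ^+ 2.
Definition qq := \sum_i b i ^+ 2.

Lemma mulM1 (w : 'cV[R]_n) i : (M1 *m w) i 0 = a i * \sum_j b j * w j 0.
Proof. rewrite !mxE mulr_sumr; apply: eq_bigr => j _; rewrite !mxE; ring. Qed.

Lemma mulM1T (v : 'cV[R]_n) j : (M1^T *m v) j 0 = b j * \sum_i a i * v i 0.
Proof. rewrite !mxE mulr_sumr; apply: eq_bigr => i _; rewrite !mxE; ring. Qed.

Lemma norm1E (v : 'cV[R]_n) : v^T *m v = 1%:M -> \sum_i v i 0 ^+ 2 = 1.
Proof.
move=> H; have := congr1 (fun M : 'M[R]_1 => M 0 0) H; rewrite !mxE /= => H1; rewrite -[RHS]H1.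
by apply: eq_bigr => i _; rewrite !mxE expr2.
Qed.

Lemma triple_facts s v w : singular_triple M1 s v w ->
  let al := \sum_i a i * v i 0 in let be := \sum_j b j * w j 0 in
  [/\ 0 <= s, (forall i, s * v i 0 = a i * be), (forall j, s * w j 0 = b j * al),
   s ^+ 2 = pp * be ^+ 2 & s ^+ 2 = qq * al ^+ 2] /\ (s * al = pp * be /\ s * be = qq * al).
Proof.
case=> [s0 [vn [wn [Hv Hw]]]] al be.
have Hvi i : s * v i 0 = a i * be.
  by have := congr1 (fun M : 'cV[R]_n => M i 0) Hv; rewrite mulM1 mxE => <-.
have Hwj j : s * w j 0 = b j * al.
  by have := congr1 (fun M : 'cV[R]_n => M j 0) Hw; rewrite mulM1T mxE => <-.
have nv := norm1E vn; have nw := norm1E wn.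
split; first split => //.
- rewrite -[LHS]mulr1 -nv mulr_sumr /pp mulr_suml; apply: eq_bigr => i _.
  by rewrite -exprMn Hvi exprMn.
- rewrite -[LHS]mulr1 -nw mulr_sumr /qq mulr_suml; apply: eq_bigr => i _.
  by rewrite -exprMn Hwj exprMn.
split.
- rewrite /al mulr_sumr /pp mulr_suml; apply: eq_bigr => i _.
  by rewrite mulrCA Hvi mulrA expr2.
- rewrite /be mulr_sumr /qq mulr_suml; apply: eq_bigr => i _.
  by rewrite mulrCA Hwj mulrA expr2.
Qed.

Lemma triple_sq s v w : singular_triple M1 s v w -> s = 0 \/ s ^+ 2 = pp * qq.
Proof.
move=> /triple_facts [[s0 _ _ E1 E2] [E3 E4]].
set al := \sum_i _ in E1 E2 E3 E4; set be := \sum_j _ in E1 E2 E3 E4.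
have E5 : s ^+ 2 * (al * be) = pp * qq * (al * be).
  have -> : s ^+ 2 * (al * be) = (s * al) * (s * be) by ring.
  by rewrite E3 E4; ring.
have [/eqP x0|x0] := boolP (al * be == 0).
  left; apply/eqP; rewrite -(sqrf_eq0 s) -(sqrf_eq0 (s ^+ 2)).
  have -> : s ^+ 2 ^+ 2 = pp * qq * (al * be) ^+ 2 by rewrite expr2 {1}E1 E2; ring.
  by rewrite x0 expr0n mulr0.
by right; apply: (mulIf x0).
Qed.

Hypotheses (pp_gt0 : 0 < pp) (qq_gt0 : 0 < qq).
Definition sp := Num.sqrt pp.
Definition sq := Num.sqrt qq.
Definition s0 := sp * sq.
Definition v0 : 'cV[R]_n := \col_i (a i / sp).
Definition w0 : 'cV[R]_n := \col_i (b i / sq).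

Lemma sp_gt0 : 0 < sp. Proof. by rewrite sqrtr_gt0. Qed.
Lemma sq_gt0 : 0 < sq. Proof. by rewrite sqrtr_gt0. Qed.
Lemma spE : pp = sp ^+ 2. Proof. by rewrite sqr_sqrtr // ltW. Qed.
Lemma sqE : qq = sq ^+ 2. Proof. by rewrite sqr_sqrtr // ltW. Qed.

Lemma s0_sq : s0 ^+ 2 = pp * qq. Proof. by rewrite spE sqE /s0 exprMn. Qed.

Lemma triple_le s v w : singular_triple M1 s v w -> s <= s0.
Proof.
move=> H; have s0ge : 0 <= s0 by rewrite mulr_ge0 // ltW ?sp_gt0 ?sq_gt0.
case: (triple_sq H) => [->|E] //.
have sge : 0 <= s by case: H.
rewrite le_eqVlt; apply/orP; left.
by rewrite -(eqrXn2 (n:=2)) // E s0_sq.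
Qed.

Lemma triple0 : singular_triple M1 s0 v0 w0.
Proof.
have hp := sp_gt0; have hq := sq_gt0.
have np : sp != 0 by rewrite gt_eqF. have nq : sq != 0 by rewrite gt_eqF.
split; first by rewrite mulr_ge0 // ltW.
split.
  apply/matrixP => i j; rewrite !ord1 !mxE /=.
  under eq_bigr => k _ do rewrite !mxE.
  rewrite -[1]/(1%:R) -(divff (x:=pp)) ?gt_eqF // {2}spE.
  rewrite /pp mulr_suml; by apply: eq_bigr => k _; field.
split.
  apply/matrixP => i j; rewrite !ord1 !mxE /=.
  under eq_bigr => k _ do rewrite !mxE.
  rewrite -[1]/(1%:R) -(divff (x:=qq)) ?gt_eqF // {2}sqE.
  rewrite /qq mulr_suml; by apply: eq_bigr => k _; field.
split.
  apply/matrixP => i j; rewrite !ord1 mulM1 !mxE.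
  under eq_bigr => k _ do rewrite !mxE.
  under eq_bigr => k _ do rewrite mulrA -expr2.
  rewrite -mulr_suml -/qq sqE /s0; by field; rewrite np nq.
apply/matrixP => i j; rewrite !ord1 mulM1T !mxE.
under eq_bigr => k _ do rewrite !mxE.
under eq_bigr => k _ do rewrite mulrA -expr2.
by rewrite -mulr_suml -/pp spE /s0; field; rewrite np nq.
Qed.

Lemma top0 : top_singular_value M1 s0.
Proof. split; first by exists v0, w0; exact: triple0.
by move=> s v w H; exact: triple_le H. Qed.

Lemma top_eq s : top_singular_value M1 s -> s = s0.
Proof.
case=> [[v [w H]] Hle]; apply/eqP; rewrite eq_le (triple_le H) /=.
exact: (Hle _ _ _ triple0).
Qed.

Lemma sqr_pm (x y : R) : 0 <= y -> x ^+ 2 = y ^+ 2 -> x = y \/ x = - y.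
Proof.
move=> _ /eqP; rewrite -subr_eq0 subr_sqr mulf_eq0 subr_eq0 addr_eq0.
by case/orP => /eqP; [left|right].
Qed.

Lemma uniq_left s v w : top_singular_value M1 s -> singular_triple M1 s v w ->
  v = v0 \/ v = - v0.
Proof.
move=> /top_eq -> /triple_facts [[_ Hv _ E1 _] _].
move: Hv E1; set be := \sum_j _ => Hv E1.
have hp := sp_gt0; have hq := sq_gt0.
have np : sp != 0 by rewrite gt_eqF. have nq : sq != 0 by rewrite gt_eqF.
have ns : s0 != 0 by rewrite mulf_neq0.
have : be ^+ 2 = sq ^+ 2.
  apply: (mulfI (x:=pp)); first by rewrite gt_eqF.
  by rewrite -E1 s0_sq sqE.
case/sqr_pm; first exact: ltW.
- move=> Eb; left; apply/matrixP => i j; rewrite ord1 !mxE.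
  apply: (mulfI ns); by rewrite Hv Eb /s0; field; rewrite ?np ?nq.
- move=> Eb; right; apply/matrixP => i j; rewrite ord1 !mxE.
  apply: (mulfI ns); by rewrite Hv Eb /s0; field; rewrite ?np ?nq.
Qed.

Lemma uniq_right s v w : top_singular_value M1 s -> singular_triple M1 s v w ->
  w = w0 \/ w = - w0.
Proof.
move=> /top_eq -> /triple_facts [[_ _ Hw _ E1] _].
move: Hw E1; set al := \sum_j _ => Hw E1.
have hp := sp_gt0; have hq := sq_gt0.
have np : sp != 0 by rewrite gt_eqF. have nq : sq != 0 by rewrite gt_eqF.
have ns : s0 != 0 by rewrite mulf_neq0.
have : al ^+ 2 = sp ^+ 2.
  apply: (mulfI (x:=qq)); first by rewrite gt_eqF.
  by rewrite -E1 s0_sq spE mulrC.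
case/sqr_pm; first exact: ltW.
- move=> Eb; left; apply/matrixP => i j; rewrite ord1 !mxE.
  apply: (mulfI ns); by rewrite Hw Eb /s0; field; rewrite ?np ?nq.
- move=> Eb; right; apply/matrixP => i j; rewrite ord1 !mxE.
  apply: (mulfI ns); by rewrite Hw Eb /s0; field; rewrite ?np ?nq.
Qed.

End Rank1.
Arguments M1 {R n}. Arguments pp {R n}. Arguments qq {R n}. Arguments sp {R n}. Arguments sq {R n}.
Arguments s0 {R n}. Arguments v0 {R n}. Arguments w0 {R n}. Arguments top0 {R n}. Arguments triple0 {R n}.
Arguments sp_gt0 {R n}. Arguments sq_gt0 {R n}.
Unset Implicit Arguments.

Lemma ord2_cases (x y z : 'I_2) : x != y -> z = x \/ z = y.
Proof.
move: x y z; do 3! case=> [[|[|//]] ?]; move=> H;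
  by [left; apply: val_inj | right; apply: val_inj | rewrite eqxx in H].
Qed.

Lemma sg_bool (R : realType) (c : bool) : Num.sg (c%:R : R) = c%:R.
Proof. by case: c; rewrite ?sgr1 ?sgr0. Qed.

Lemma bool_R0 (R : realType) (c : bool) : (c%:R : R) = 0 -> c = false.
Proof. by case: c => // /eqP; rewrite oner_eq0. Qed.

Lemma bool_R1 (R : realType) (c : bool) : (c%:R : R) = 1 -> c = true.
Proof. by case: c => // /eqP; rewrite eq_sym oner_eq0. Qed.

Lemma dips_struct (R : realType) (n : nat) (e : rel 'I_n)
  (He : simple_digraph e) (Hedge : exists i j : 'I_n, e i j)
  (phi : 'I_n -> 'I_2) (r : 'M[R]_2) :
  exact_DIPS_summ (adjacency R e) phi r ->
  exists I J : 'I_2, [/\ I != J, (forall i j, e i j = (phi i == I) && (phi j == J)),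
     (exists i, phi i = I) & (exists j, phi j = J)].
Proof.
case=> [[Hsurj [Hdiag Hanti]] Hsg].
case: Hedge => i0 [j0 Ei0].
have ne : i0 != j0 by apply: contraTneq Ei0 => ->; rewrite He.
have Hr : 0 < r (phi i0) (phi j0).
  by rewrite -sgr_gt0 -Hsg // mxE Ei0 sg_bool ltr01.
move: Hr; set I := phi i0; set J := phi j0 => Hr.
have nIJ : I != J by apply: contraTneq Hr => ->; rewrite Hdiag ltxx.
have rJI : r J I = 0.
  by have /eqP := Hanti I J; rewrite mulf_eq0 (negbTE (lt0r_neq0 Hr)) /= => /eqP.
exists I, J; split; [done| |by exists i0|by exists j0].
move=> i j; have [->|nij] := eqVneq i j.
    by rewrite He; case: eqP => //= ->; rewrite (negbTE nIJ).
  have := Hsg i j nij; rewrite mxE sg_bool.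
  case: (ord2_cases I J (phi i) nIJ) => Ei; case: (ord2_cases I J (phi j) nIJ) => Ej;
    rewrite Ei Ej ?Hdiag ?rJI ?sgr0 ?(gtr0_sg Hr) ?eqxx ?(negbTE nIJ) 1?eq_sym ?(negbTE nIJ);
    by [move/bool_R0 | move/bool_R1].
Qed.

Lemma out_in (n : nat) (e : rel 'I_n) (phi : 'I_n -> 'I_2) (I J : 'I_2) :
  (forall i j, e i j = (phi i == I) && (phi j == J)) ->
  (exists i, phi i = I) -> (exists j, phi j = J) ->
  forall x, [exists j, e x j] = (phi x == I) /\ [exists i, e i x] = (phi x == J).
Proof.
move=> He [i1 Hi1] [j1 Hj1] x; split; apply/existsP/idP.
- by case=> j; rewrite He => /andP [].
- by move=> Hx; exists j1; rewrite He Hx Hj1 eqxx.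
- by case=> i; rewrite He => /andP [].
- by move=> Hx; exists i1; rewrite He Hx Hi1 eqxx.
Qed.

Lemma pos_bool (R : realType) (c : bool) (t : R) : 0 < t -> (0 < c%:R / t) = c.
Proof. by move=> ht; case: c; rewrite ?mul0r ?ltxx // mul1r invr_gt0. Qed.

Lemma sum_sq_gt0 (R : realType) (n : nat) (f : 'I_n -> R) i : f i != 0 ->
  0 < \sum_k f k ^+ 2.
Proof.
move=> hi; rewrite (bigD1 i) //=.
have h1 : 0 < f i ^+ 2 by rewrite lt0r sqr_ge0 andbT sqrf_eq0.
have h2 : 0 <= \sum_(k | k != i) f k ^+ 2 by apply: sumr_ge0 => k _; exact: sqr_ge0.
exact: ltr_wpDr h2 h1.
Qed.

Theorem theorem5 (R : realType) (n : nat) (e : rel 'I_n)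
  (He : simple_digraph e)
  (Hedge : exists i j : 'I_n, e i j)
  (HD : has_exact_DIPS 2 (adjacency R e)) :
  exists v w : 'cV[R]_n,
    leading_left_sv (adjacency R e) v /\
        leading_right_sv (adjacency R e) w /\
        ((forall i, 0 <= v i 0) /\ (forall i, 0 <= w i 0)) /\
        (forall u, leading_left_sv (adjacency R e) u -> u = v \/ u = - v) /\
        (forall u, leading_right_sv (adjacency R e) u -> u = w \/ u = - w) /\
        (forall (phi : 'I_n -> 'I_2) (r : 'M[R]_2),
           exact_DIPS_summ (adjacency R e) phi r ->
           exists I J : 'I_2, I != J /\
             (forall x, (0 < v x 0) = (phi x == I)) /\
             (forall x, (0 < w x 0) = (phi x == J))).
Proof.
case: HD => phi0 [r0 Hs].
case: (@dips_struct R n e He Hedge phi0 r0 Hs) => I0 [J0 [nIJ He0 [i1 Hi1] [j1 Hj1]]].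
pose a i : R := ([exists j, e i j])%:R.
pose b j : R := ([exists i, e i j])%:R.
have OI := @out_in n e phi0 I0 J0 He0 (ex_intro _ i1 Hi1) (ex_intro _ j1 Hj1).
have HA : adjacency R e = M1 a b.
  apply/matrixP => i j; rewrite !mxE /a /b He0 (OI i).1 (OI j).2.
  by case: (phi0 i == I0); case: (phi0 j == J0); rewrite ?mul0r ?mul1r.
have Hp : 0 < pp a.
  apply: (@sum_sq_gt0 R n a i1); rewrite /a (OI i1).1 Hi1 eqxx oner_eq0 //.
have Hq : 0 < qq b.
  apply: (@sum_sq_gt0 R n b j1); rewrite /b (OI j1).2 Hj1 eqxx oner_eq0 //.
exists (v0 a), (w0 b); rewrite HA.
split; first by exists (s0 a b), (w0 b); split; [exact: top0 | exact: triple0].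
split; first by exists (s0 a b), (v0 a); split; [exact: top0 | exact: triple0].
split.
  split=> i; rewrite mxE divr_ge0 ?ler0n // ltW //; [exact: sp_gt0 | exact: sq_gt0].
split; first by move=> u [s [w [Ht Htr]]]; exact (uniq_left Hp Hq Ht Htr).
split; first by move=> u [s [v [Ht Htr]]]; exact (uniq_right Hp Hq Ht Htr).
move=> phi r; rewrite -HA => H.
case: (@dips_struct R n e He Hedge phi r H) => I [J [nIJ' He' sI sJ]].
have OI' := @out_in n e phi I J He' sI sJ.
exists I, J; split => //; split => x; rewrite mxE pos_bool.
- by rewrite (OI' x).1.
- exact: sp_gt0.
- by rewrite (OI' x).2.
- exact: sq_gt0.
Qed.
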